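(* In an inventory system as in the context, every admissible policy $\pi$ satisfies $J_\pi(0)\ge N\,G(M)$, where $M=\frac{\Delta+\sum_{k=0}^{N-1}\mu_k}{N}$. In particular $J^*(0)\ge N\,G(M)$.
   Context: Inventory system: $N\ge1$; $G:\mathbb{R}_{\ge0}\to\mathbb{R}_{\ge0}$ is strictly convex and increasing with $G(0)=0$. Demands $w_0,\dots,w_{N-1}$ are independent random variables; $w_k$ has mean $\mu_k$, variance $\sigma_k^2$, and support exactly $[\mu_k-\Delta,\mu_k+\Delta]$, where $\Delta\ge0$ and $\mu_k-\Delta>0$ for all $k$. A (Markov) policy is a sequence $\pi=(\pi_0,\dots,\pi_{N-1})$ of measurable maps $\pi_k:\mathbb{R}_{\ge0}\to\mathbb{R}_{\ge0}$; the state evolves by $x_0=0$, $x_{k+1}=x_k+\pi_k(x_k)-w_k$. A policy is admissible if $x_k\ge0$ almost surely for all $k\in\{1,\dots,N\}$. Its expected cost is $J_\pi(0)=\sum_{k=0}^{N-1}\mathbb{E}[G(\pi_k(x_k))]$, and $J^*(0)$ is the infimum of $J_\pi(0)$ over admissible policies. *)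

(* Defs.v *)
From HB Require Import structures.
From mathcomp Require Import all_boot all_order all_algebra.
From mathcomp Require Import all_classical all_reals all_analysis.
Unset Printing Implicit Defensive.
Import Order.TTheory GRing.Theory Num.Theory.
Local Open Scope classical_set_scope.
Local Open Scope ring_scope.

(* Mutual independence of the finite family w_0, ..., w_{N-1} of real random
   variables: product rule for every choice of Borel sets (taking B k = setT
   recovers every subfamily). *)
Definition mutually_independent {d} {T : measurableType d} {R : realType}
  (P : probability T R) (N : nat) (w : nat -> {RV P >-> R}) : Prop :=
  forall B : nat -> set R, (forall k, measurable (B k)) ->
    P [set x | forall k, (k < N)%N -> B k (w k x)] =
    (\prod_(k < N) P (w k @^-1` B k))%E.

Definition support_exactly {d} {T : measurableType d} {R : realType}
  (P : probability T R) (X : {RV P >-> R}) (a b : R) : Prop :=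
  P [set x | X x \in `[a, b]] = 1%E /\
  forall y, y \in `[a, b] -> forall e : R, 0 < e ->
    (0 < P [set x | (`|X x - y| < e)%R])%E.

Fixpoint state {T : Type} {R : realType} (pi : nat -> R -> R)
  (w : nat -> T -> R) (k : nat) : T -> R :=
  match k with
  | 0 => fun _ => 0
  | k'.+1 => fun x => state pi w k' x + pi k' (state pi w k' x) - w k' x
  end.

(* The paper's
   pi_k : R>=0 -> R>=0 is represented by any measurable nonnegative extension
   to R (only its values on [0,+oo) matter, up to null sets). *)
Definition is_policy {R : realType} (pi : nat -> R -> R) : Prop :=
  forall k, measurable_fun setT (pi k) /\ forall x, 0 <= pi k x.

Definition admissible {d} {T : measurableType d} {R : realType}
  (P : probability T R) (N : nat) (w : nat -> {RV P >-> R})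
  (pi : nat -> R -> R) : Prop :=
  is_policy pi /\
  forall k, (1 <= k <= N)%N -> {ae P, forall x, 0 <= state pi (fun j => w j) k x}.

Definition cost {d} {T : measurableType d} {R : realType}
  (P : probability T R) (N : nat) (w : nat -> {RV P >-> R})
  (G : R -> R) (pi : nat -> R -> R) : \bar R :=
  (\sum_(k < N) \int[P]_x (G (pi k (state pi (fun j => w j) k x)))%:E)%E.

Definition opt_cost {d} {T : measurableType d} {R : realType}
  (P : probability T R) (N : nat) (w : nat -> {RV P >-> R})
  (G : R -> R) : \bar R :=
  ereal_inf [set cost P N w G pi | pi in admissible P N w].

(* Main.v *)
Require Import Defs.
From HB Require Import structures.
From mathcomp Require Import all_boot all_order all_algebra.
From mathcomp Require Import all_classical all_reals all_analysis.
From mathcomp Require Import measurable_realfun.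
Import Order.TTheory GRing.Theory Num.Theory.
Local Open Scope classical_set_scope.
Local Open Scope ring_scope.
From mathcomp Require Import ring lra.

Lemma subgrad {R : realType} (G : R -> R) (M : R) : 0 < M ->
  (forall x y t, 0 <= x -> 0 <= y -> x != y -> 0 < t < 1 ->
     G (t * x + (1 - t) * y) < t * G x + (1 - t) * G y) ->
  (forall x y, 0 <= x -> x < y -> G x < G y) ->
  exists c, 0 <= c /\ forall y, 0 <= y -> G M + c * (y - M) <= G y.
Proof.
move=> M0 conv mono.
have convw x y t : 0 <= x -> 0 <= y -> 0 < t < 1 ->
    G (t * x + (1 - t) * y) <= t * G x + (1 - t) * G y.
  move=> x0 y0 t01; have [->|xy] := eqVneq x y.
    by rewrite -mulrDl subrKC mul1r -mulrDl subrKC mul1r.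
  exact/ltW/conv.
have slope x z : 0 <= x -> x < M -> M < z ->
    (G M - G x) / (M - x) <= (G z - G M) / (z - M).
  move=> x0 xM Mz.
  have zx : 0 < z - x by rewrite subr_gt0; exact: lt_trans Mz.
  set t := (z - M) / (z - x).
  have t01 : 0 < t < 1.
    apply/andP; split; first by rewrite /t divr_gt0 // subr_gt0.
    by rewrite /t ltr_pdivrMr // mul1r ltrD2l ltrN2.
  have ht : t * x + (1 - t) * z = M.
    by rewrite /t; field; rewrite subr_eq0 gt_eqF // (lt_trans xM Mz).
  have h := convw x z t x0 (le_trans x0 (ltW (lt_trans xM Mz))) t01.
  rewrite ht in h.
  have e1 : z - M = (z - x) * t.
    by rewrite /t; field; rewrite subr_eq0 gt_eqF // (lt_trans xM Mz).
  have e2 : M - x = (z - x) * (1 - t).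
    by rewrite /t; field; rewrite subr_eq0 gt_eqF // (lt_trans xM Mz).
  have key : (z - x) * G M <= (z - M) * G x + (M - x) * G z.
    clearbody t; rewrite e1 e2 -!mulrA -mulrDr; apply: ler_wpM2l; [exact: ltW | exact: h].
  rewrite ler_pdivrMr ?subr_gt0 // mulrAC ler_pdivlMr ?subr_gt0 //.
  nra.
pose S := [set s | exists2 x, 0 <= x < M & s = (G M - G x) / (M - x)].
have S0 : S ((G M - G 0) / (M - 0)) by exists 0 => //; rewrite lexx.
have Sne : S !=set0 by exists ((G M - G 0) / (M - 0)).
have Sub : forall z, M < z -> ubound S ((G z - G M) / (z - M)).
  by move=> z Mz s [x /andP[x0 xM] ->]; exact: slope.
have hS : has_sup S.
  split => //; exists ((G (M + 1) - G M) / (M + 1 - M)); apply: Sub.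
  by rewrite ltrDl.
exists (sup S); split.
  apply: le_trans (sup_upper_bound hS S0).
  by rewrite divr_ge0 // ?subr_ge0 ?subr0 ?(ltW M0) // ltW // mono.
move=> y y0.
have [yM|My|<-]:= ltgtP y M.
- have Sy : S ((G M - G y) / (M - y)) by exists y => //; rewrite y0.
  have := sup_upper_bound hS Sy.
  rewrite ler_pdivrMr ?subr_gt0 // => h.
  nra.
- have := ge_sup Sne (Sub _ My).
  rewrite ler_pdivlMr ?subr_gt0 // => h.
  lra.
- by rewrite subrr mulr0 addr0.
Qed.

Section Aux.
Context {R : realType} {d : measure_display} {T : measurableType d}.

Definition rectn (w : nat -> T -> R) (n : nat) : set (set T) :=
  [set A | exists B : nat -> set R, (forall k, measurable (B k)) /\
     A = [set x | forall k, (k < n)%N -> B k (w k x)]].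

Lemma rectn_meas (w : nat -> T -> R) n A :
  (forall k, measurable_fun setT (w k)) -> rectn w n A -> measurable A.
Proof.
move=> mw [B [mB ->]].
have -> : [set x | forall k, (k < n)%N -> B k (w k x)] =
  \bigcap_(k in [set: nat]) (if (k < n)%N then w k @^-1` B k else setT).
  apply/seteqP; split => x /=.
    by move=> h k _; case: ifP => // /h.
  by move=> h k kn; have := h k I; rewrite kn.
apply: bigcap_measurable; first by exists 0%N.
move=> k _; case: ifP => _ //.
by rewrite -(setTI (_ @^-1` _)); apply: mw.
Qed.

Lemma rectn_setI w n : setI_closed (rectn w n).
Proof.
move=> A1 A2 [B1 [mB1 ->]] [B2 [mB2 ->]].
exists (fun k => B1 k `&` B2 k); split; first by move=> k; exact: measurableI.
apply/seteqP; split => x /=.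
  by move=> [h1 h2] k kn; split; [exact: h1|exact: h2].
by move=> h; split => k kn; have [] := h k kn.
Qed.

Lemma rectn_T w n : rectn w n setT.
Proof.
exists (fun _ => setT); split => //.
by apply/seteqP; split => x //=.
Qed.


Local Open Scope ereal_scope.

Lemma indep_rect (P : probability T R) (w : nat -> {RV P >-> R}) n :
  mutually_independent P n.+1 w ->
  forall A C, rectn (fun k => w k) n A -> measurable C ->
  P (A `&` (w n @^-1` C)) = P A * P (w n @^-1` C).
Proof.
move=> ind A C [B [mB ->]] mC.
have h1 := ind (fun k => if k == n then C else B k).
have h2 := ind (fun k => if k == n then setT else B k).
rewrite big_ord_recr /= eqxx in h1.
rewrite big_ord_recr /= eqxx in h2.
have E1 : forall (B' : nat -> set R), \prod_(i < n) P (w (widen_ord (leqnSn n) i) @^-1`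
     (if (widen_ord (leqnSn n) i : nat) == n then B' i else B i)) =
   \prod_(i < n) P (w i @^-1` B i).
  move=> B'; apply: eq_bigr => i _ /=.
  by rewrite ifF // ltn_eqF.
rewrite (E1 (fun _ => C)) in h1.
rewrite (E1 (fun _ => setT)) in h2.
rewrite preimage_setT probability_setT mule1 in h2.
have -> : [set x | forall k, (k < n)%N -> B k (w k x)] `&` w n @^-1` C =
   [set x | forall k, (k < n.+1)%N -> (if k == n then C else B k) (w k x)].
  apply/seteqP; split => x /=.
    move=> [h hC] k; rewrite ltnS leq_eqVlt; case: eqP => [->//|_ /= kn].
    exact: h.
  move=> h; split; last by have := h n (ltnSn n); rewrite eqxx.
  by move=> k kn; have := h k (ltnW kn); rewrite ltn_eqF.
have -> : [set x | forall k, (k < n)%N -> B k (w k x)] =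
   [set x | forall k, (k < n.+1)%N -> (if k == n then setT else B k) (w k x)].
  apply/seteqP; split => x /=.
    move=> h k; rewrite ltnS leq_eqVlt; case: eqP => [->//|_ /= kn].
    exact: h.
  by move=> h k kn; have := h k (ltnW kn); rewrite ltn_eqF.
rewrite h1 ?h2 //.
- by move=> k; case: ifP.
- by move=> k; case: ifP.
Qed.


Lemma indep_sigma (P : probability T R) (w : nat -> {RV P >-> R}) n :
  mutually_independent P n.+1 w ->
  forall C, measurable C -> forall A, <<s rectn (fun k => w k) n >> A ->
  P (A `&` (w n @^-1` C)) = P A * P (w n @^-1` C).
Proof.
move=> ind C mC.
set E := w n @^-1` C.
have mE : measurable E by exact: measurable_funPTI.
have finE : P E \is a fin_num by exact: fin_num_measure.
set H := [set A | measurable A /\ P (A `&` E) = P A * P E].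
suff: <<s rectn (fun k => w k) n >> `<=` H by move=> h A /h[].
apply: lambda_system_subset.
- exact: rectn_setI.
- split.
  + by [].
  + by split; [exact: measurableT | rewrite setTI probability_setT mul1e].
  + move=> A B BA [mA hA] [mB hB]; split; first exact: measurableD.
    have -> : (A `\` B) `&` E = (A `&` E) `\` (B `&` E).
      apply/seteqP; split => x /=; first by move=> [[? ?] ?]; split => // -[].
      by move=> [[? ?] h]; split => //; split => // ?; apply: h.
    rewrite measureD; [|exact: measurableI|exact: measurableI|].
      have -> : (A `&` E) `&` (B `&` E) = B `&` E.
        apply/seteqP; split => x /=; first by move=> [_ ?].
        by move=> [? ?]; split => //; split => //; apply: BA.
      rewrite measureD //; last by rewrite ltey_eq fin_num_measure.
      have -> : A `&` B = B.
        by apply/seteqP; split => x /=; [move=> [] | move=> ?; split => //; apply: BA].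
      rewrite muleBl //.
        by congr (_ - _); [exact: hA | exact: hB].
      by apply: fin_num_adde_defl; rewrite fin_numN fin_num_measure.
    by rewrite ltey_eq fin_num_measure //; exact: measurableI.
  + move=> F ndF hF.
    have mF k : measurable (F k) := (hF k).1.
    split; first exact: bigcupT_measurable.
    have c1 := @nondecreasing_cvg_mu _ _ _ P F mF (bigcupT_measurable _ mF) ndF.
    have c2 : (fun k => P (F k `&` E)) @ \oo --> P (\bigcup_k F k `&` E).
      rewrite setI_bigcupl; apply: nondecreasing_cvg_mu.
      - by move=> k; exact: measurableI.
      - by apply: bigcupT_measurable => k; exact: measurableI.
      - move=> a b ab; rewrite subsetEset; move: (ndF a b ab); rewrite subsetEset => h x [Fx Ex]; split => //; exact: h.
    have c3 := cvgeZr finE c1.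
    have e : (fun k => (P \o F) k * P E) = (fun k => P (F k `&` E)).
      by apply: funext => k /=; rewrite (hF k).2.
    rewrite e in c3.
    exact: (cvg_unique (@ereal_hausdorff R) c2 c3).
- move=> A hA; rewrite /H /=; split; last exact: indep_rect.
  by apply: (@rectn_meas (fun k => w k) n A) => // k; exact: measurable_funP.
- by [].
Qed.


Local Close Scope ereal_scope.

Lemma state_meas {d0} {T0 : measurableType d0} (wf : nat -> T0 -> R)
  (pi : nat -> R -> R) j : is_policy pi ->
  (forall k, (k < j)%N -> measurable_fun setT (wf k)) ->
  measurable_fun setT (state pi wf j).
Proof.
move=> hpi; elim: j => [|j IH] hw /=; first exact: measurable_cst.
have mj : measurable_fun setT (state pi wf j) by apply: IH => k kj; apply: hw; exact: ltnW.
apply: measurable_funB; last exact: hw.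
apply: measurable_funD => //.
exact: measurableT_comp (hpi j).1 mj.
Qed.

Local Open Scope ereal_scope.

Lemma key_null (P : probability T R) (w : nat -> {RV P >-> R}) n
  (pi : nat -> R -> R) (c : R) :
  mutually_independent P n.+1 w -> is_policy pi ->
  {ae P, forall x, (0 <= state pi (fun j => w j) n.+1 x)%R} ->
  0 < P (w n @^-1` `]c, +oo[) ->
  let A := [set x | (state pi (fun j => w j) n x +
                    pi n (state pi (fun j => w j) n x) < c)%R] in
  measurable A /\ P A = 0.
Proof.
move=> ind hpi hae hE A.
set g := fun x => (state pi (fun j => w j) n x + pi n (state pi (fun j => w j) n x))%R.
have mg : forall (d0 : measure_display) (T0 : measurableType d0) (wf : nat -> T0 -> R),
    (forall k, (k < n)%N -> measurable_fun setT (wf k)) ->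
    measurable_fun setT (fun x => state pi wf n x + pi n (state pi wf n x))%R.
  move=> d0 T0 wf hw; apply: measurable_funD; first exact: state_meas.
  apply: measurableT_comp; [exact: (hpi n).1 | exact: state_meas].

have AE : A = setT `&` g @^-1` `]-oo, c[.
  rewrite /A /g; apply/seteqP; split => x /=; rewrite in_itv /=; [by move=> h; split | by move=> [_ h]].
have mA : measurable A.
  rewrite AE; apply: (mg _ T (fun j => w j)) => // k _; exact: measurable_funP.
split => //.
pose T' := g_sigma_algebraType (rectn (fun k => (w k : T -> R)) n).
have sA : <<s rectn (fun k => (w k : T -> R)) n >> A.
  rewrite AE.
  have := @mg _ T' (fun k => (w k : T -> R)) _ measurableT _ (measurable_itv `]-oo, c[).
  apply.
  move=> k kn _ Y mY.
  apply: sub_sigma_algebra.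
  exists (fun j => if j == k then Y else setT); split.
    by move=> j; case: ifP.
  apply/seteqP; split => x /=.
    by move=> [_ h] j jn; case: eqP => [->//|].
  by move=> h; split => //; have := h k kn; rewrite eqxx.
have hind := @indep_sigma P w n ind _ (measurable_itv `]c, +oo[) A sA.
have : P (A `&` w n @^-1` `]c, +oo[) = 0.
  move: hae => [N0 [mN0 PN0 sub]].
  apply/eqP; rewrite eq_le measure_ge0 andbT -PN0.
  apply: le_measure; rewrite ?inE //.
    by apply: measurableI => //; exact: measurable_funPTI.
  move=> x [/= Ax]; rewrite in_itv /= andbT => cw.
  apply: sub => /= h; move: h; apply/negP; rewrite -ltNge.
  by rewrite /= subr_lt0 (lt_trans Ax cw).
rewrite hind => /eqP; rewrite mule_eq0 => /orP[/eqP //|/eqP h].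
by move: hE; rewrite h ltxx.
Qed.


Lemma state_sum (pi : nat -> R -> R) (wf : nat -> T -> R) j x :
  state pi wf j x = (\sum_(k < j) (pi k (state pi wf k x) - wf k x))%R.
Proof.
elim: j => [|j IH]; first by rewrite big_ord0.
by rewrite /= big_ord_recr /= IH addrA.
Qed.

Lemma int_lb (P : probability T R) (f L : T -> R) (A : set T) :
  measurable A -> P A = 0 -> measurable_fun setT f -> (forall x, (0 <= f x)%R) ->
  P.-integrable setT (EFin \o L) -> (forall x, ~ A x -> (L x <= f x)%R) ->
  \int[P]_x (L x)%:E <= \int[P]_x (f x)%:E.
Proof.
move=> mA PA mf f0 iL hL.
have mL : measurable_fun setT (EFin \o L) := measurable_int _ iL.
rewrite integralE.
apply: (@le_trans _ _ (\int[P]_x (EFin \o L)^\+ x)).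
  rewrite -[X in _ <= X]adde0; apply: leeD => //.
  by rewrite oppe_le0; apply: integral_ge0 => x _; exact: funeneg_ge0.
apply: ae_ge0_le_integral => //.
- exact: measurable_funepos.
- by move=> x _; rewrite lee_fin.
- exact/measurable_EFinP.
- exists A; split => // x /= h; apply: contrapT => nA; apply: h => _.
  rewrite funeposE /= ge_max !lee_fin f0 andbT.
  exact: hL.
Qed.

Lemma rv_integrable (P : probability T R) (X : {RV P >-> R}) a b :
  (0 <= a)%R -> (0 <= b)%R -> P [set x | X x \in `[a, b]] = 1 ->
  P.-integrable setT (EFin \o X).
Proof.
move=> a0 b0 PS.
have mS : measurable [set x | X x \in `[a, b]].
  have -> : [set x | X x \in `[a, b]] = X @^-1` `[a, b] by [].
  exact: measurable_funPTI.
apply/integrableP; split; first exact/measurable_EFinP/measurable_funP.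
apply: (@le_lt_trans _ _ (\int[P]_x (cst b%:E) x)); last first.
  by rewrite integral_cst // ltey_eq fin_numM // fin_num_measure.
apply: ae_ge0_le_integral => //.
- apply: (eq_measurable_fun (fun x => (`|X x|)%:E)).
    by move=> x _ /=.
  apply/measurable_EFinP.
  apply: measurableT_comp; last exact: measurable_funP.
  exact: normr_measurable.
- exists (~` [set x | X x \in `[a, b]]); split.
  + exact: measurableC.
  + have h := @probability_setC _ _ _ P _ mS.
    rewrite PS subee // in h.
  + move=> x /= h hS; apply: h => _.
    move: hS; rewrite in_itv /= => /andP[ax xb].
    by rewrite lee_fin ger0_norm // (le_trans a0 ax).
Qed.

Lemma pos_right (P : probability T R) (X : {RV P >-> R}) a b c :
  support_exactly P X a b -> (a <= b)%R -> (c < b)%R ->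
  0 < P (X @^-1` `]c, +oo[).
Proof.
move=> [_ h] ab cb.
have := h b _ (b - c)%R _.
rewrite in_itv /= ab lexx subr_gt0 => /(_ isT cb) h'.
have e : (b - (b - c) = c)%R by rewrite opprB addrC subrK.
apply: (lt_le_trans h'); apply: le_measure; rewrite ?inE.
- have -> : [set x | (`|X x - b| < b - c)%R] = X @^-1` `]c, (b + (b - c))%R[.
    by apply/seteqP; split => x /=; rewrite ltr_distl in_itv /= e.
  exact: measurable_funPTI.
- exact: measurable_funPTI.
- move=> x /=; rewrite ltr_distl in_itv /= andbT e.
  by move=> /andP[].
Qed.

End Aux.

Local Open Scope ring_scope.

Theorem mainTheorem6 (R : realType) (d : measure_display) (T : measurableType d)
  (P : probability T R) (N : nat) (G : R -> R) (Delta : R) (mu sigma : nat -> R)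
  (w : nat -> {RV P >-> R}) :
  (1 <= N)%N ->
  (* G : R>=0 -> R>=0, strictly convex, increasing, G(0) = 0 *)
  (forall x, 0 <= x -> 0 <= G x) ->
  (forall x y t, 0 <= x -> 0 <= y -> x != y -> 0 < t < 1 ->
     G (t * x + (1 - t) * y) < t * G x + (1 - t) * G y) ->
  (forall x y, 0 <= x -> x < y -> G x < G y) ->
  G 0 = 0 ->
  (* demands *)
  0 <= Delta ->
  (forall k, (k < N)%N -> 0 < mu k - Delta) ->
  mutually_independent P N w ->
  (forall k, (k < N)%N -> ('E_P[w k] = (mu k)%:E)%E) ->
  (forall k, (k < N)%N -> variance P (w k) = (sigma k ^+ 2)%:E) ->
  (forall k, (k < N)%N -> support_exactly P (w k) (mu k - Delta) (mu k + Delta)) ->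
  let M := (Delta + \sum_(k < N) mu k) / N%:R in
  (forall pi, admissible P N w pi -> ((N%:R * G M)%:E <= cost P N w G pi)%E) /\
  ((N%:R * G M)%:E <= opt_cost P N w G)%E.
Proof.
case: N => [//|n] _ G0 conv mono G00 D0 muD ind Ew Vw supp M.
have mupos k : (k < n.+1)%N -> 0 < mu k.
  by move=> kn; have := muD k kn; lra.
have main : forall pi, admissible P n.+1 w pi ->
    ((n.+1%:R * G M)%:E <= cost P n.+1 w G pi)%E.
  move=> pi [hpi hadm].
  have M0 : 0 < M.
    rewrite /M divr_gt0 // big_ord_recr /=.
    have := mupos n (ltnSn n).
    have : 0 <= \sum_(i < n) mu (widen_ord (leqnSn n) i).
      by apply: sumr_ge0 => i _; apply: ltW; apply: mupos; exact: ltn_ord.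
    lra.
  have [cg [cg0 sub]] := @subgrad _ G M M0 conv mono.
  apply/lee_addgt0Pr => e e0.
  set eps := e / (cg + 1).
  have eps0 : 0 < eps by rewrite divr_gt0 //; lra.
  have cgeps : cg * eps <= e.
    rewrite /eps mulrA ler_pdivrMr; last by lra.
    nra.
  set c := mu n + Delta - eps.
  have hE := @pos_right R d T P (w n) (mu n - Delta) (mu n + Delta) c (supp n (ltnSn n)) (ltac:(lra) : mu n - Delta <= mu n + Delta)
     (ltac:(rewrite /c; lra) : c < mu n + Delta).
  have hae := hadm n.+1 (ltac:(by rewrite leqnn)).
  have [mA PA] := @key_null R d T P w n pi c ind hpi hae hE.
  set u := fun k x => pi k (state pi (fun j => w j) k x).
  have u0 k x : 0 <= u k x by exact: (hpi k).2.
  have mw : forall k, measurable_fun setT (w k : T -> R).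
    by move=> k; exact: measurable_funP.
  have mu_k k : measurable_fun setT (u k).
    apply: measurableT_comp; first exact: (hpi k).1.
    by apply: state_meas => // j _; exact: mw.
  have mGu k : measurable_fun setT (fun x => G (u k x)).
    have -> : (fun x => G (u k x)) = (fun y => G (Num.max y 0)) \o u k.
      by apply: funext => x /=; rewrite max_l.
    apply: measurableT_comp (mu_k k).
    apply: nondecreasing_measurable => // y z yz.
    have h : Num.max y 0 <= Num.max z 0 by rewrite ge_max !le_max yz lexx orbT.
    have h0 : 0 <= Num.max y 0 by rewrite le_max lexx orbT.
    move: h; rewrite le_eqVlt => /orP[/eqP ->//|h].
    exact/ltW/mono.
  set f := fun x => \sum_(k < n.+1) G (u k x).
  have mf : measurable_fun setT f by apply: measurable_sum => k; exact: mGu.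
  have f0 x : 0 <= f x by apply: sumr_ge0 => k _; exact: G0.
  have cost_eq : cost P n.+1 w G pi = (\int[P]_x (f x)%:E)%E.
    rewrite /cost /f.
    under [X in _ = X]eq_integral do rewrite -sumEFin.
    rewrite ge0_integral_sum //.
      by move=> k; apply/measurable_EFinP; exact: mGu.
    by move=> k x _; rewrite lee_fin G0.
  set a := n.+1%:R * G M + cg * (c - n.+1%:R * M).
  set L := fun x => a + cg * \sum_(k < n) w k x.
  have iw : forall k, (k < n.+1)%N -> P.-integrable setT (EFin \o w k).
    move=> k kn; apply: (@rv_integrable _ _ _ P (w k) (mu k - Delta) (mu k + Delta)).
    - by have := muD k kn; lra.
    - by have := mupos k kn; lra.
    - exact: (supp k kn).1.
  have EL : EFin \o L = (fun x => a%:E + cg%:E * \sum_(k < n) (w k x)%:E)%E.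
    by apply: funext => x /=; rewrite sumEFin -EFinM -EFinD.
  have iL : P.-integrable setT (EFin \o L).
    rewrite EL; apply: integrableD => //.
      exact: finite_measure_integrable_cst.
    apply: integrableZl => //; apply: integrable_sum => // k _.
    by apply: iw; exact: leqW.
  have intL : (\int[P]_x (L x)%:E = (n.+1%:R * G M - cg * eps)%:E)%E.
    have -> : (\int[P]_x (L x)%:E = \int[P]_x (EFin \o L) x)%E by [].
    rewrite EL integralD //; last first.
      apply: integrableZl => //; apply: integrable_sum => // k _.
      by apply: iw; exact: leqW.
      exact: finite_measure_integrable_cst.
    rewrite integral_cst // integralZl //; last first.
      by apply: integrable_sum => // k _; apply: iw; exact: leqW.
    rewrite integral_sum //; last by move=> k; apply: iw; exact: leqW.
    rewrite (eq_bigr (fun k : 'I_n => (mu k)%:E)); last first.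
      by move=> k _; rewrite -Ew ?expectation_def //; exact: leqW.
    rewrite [X in (a%:E * X)%E](_ : _ = 1%E); last exact: probability_setT.
    rewrite mule1 sumEFin -EFinM -EFinD; congr (_%:E).
    have NM : n.+1%:R * M = Delta + \sum_(k < n) mu k + mu n.
      rewrite /M mulrC divfK ?pnatr_eq0 // big_ord_recr /= addrA.
      by congr (_ + _ + _); apply: eq_bigr.
    rewrite /a NM /c; lra.
  have pw : forall x, ~ [set x | state pi (fun j => w j) n x +
                    pi n (state pi (fun j => w j) n x) < c] x -> L x <= f x.
    move=> x nA.
    have hc : c <= state pi (fun j => w j) n x + pi n (state pi (fun j => w j) n x).
      by rewrite leNgt; apply/negP.
    have hsum : \sum_(k < n.+1) u k x =
        state pi (fun j => w j) n x + u n x + \sum_(k < n) w k x.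
      rewrite big_ord_recr /= (state_sum pi (fun j => w j) n x) sumrB /u /=.
      ring.
    have hlow : \sum_(k < n.+1) (G M + cg * (u k x - M)) <= f x.
      by apply: ler_sum => k _; apply: sub; exact: u0.
    rewrite big_split /= -mulr_sumr sumrB !sumr_const card_ord in hlow.
    rewrite /L /a.
    have : cg * (c + \sum_(k < n) w k x) <= cg * \sum_(k < n.+1) u k x.
      apply: ler_wpM2l => //; rewrite hsum /u; lra.
    rewrite -[G M *+ _]mulr_natl -[M *+ _]mulr_natl in hlow.
    move=> h; apply: le_trans hlow.
    set SU := \sum_(i < n.+1) u i x.
    set SW := \sum_(k < n) w k x.
    have e1 : n.+1%:R * G M + cg * (c - n.+1%:R * M) + cg * SW =
      n.+1%:R * G M - cg * (n.+1%:R * M) + cg * (c + SW) by ring.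
    have e2 : n.+1%:R * G M + cg * (SU - n.+1%:R * M) =
      n.+1%:R * G M - cg * (n.+1%:R * M) + cg * SU by ring.
    rewrite e1 e2.
    by rewrite lerD2l.
  have lb := @int_lb R d T P f L _ mA PA mf f0 iL pw.
  rewrite cost_eq.
  apply: (@le_trans _ _ ((n.+1%:R * G M - cg * eps)%:E + e%:E)%E).
    by rewrite -EFinD lee_fin; lra.
  by apply: leeD => //; rewrite -intL; exact: lb.
split; first exact: main.
by apply/ereal_infP => y [pi adm <-]; exact: main.
Qed.
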